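(* If $G$ is a finite non-commutative group equipped with any stable order, then $N^1(G)=\Omega(n)$.
   Context: A stable order on a monoid $M$ is a partial order with $x\le y\Rightarrow zx\le zy$ and $xz\le yz$ for all $z\in M$. Non-deterministic communication complexity: for $f:X\times Y\to\{0,1\}$, $N^1(f)$ is the minimum cost of a non-deterministic protocol for $f$; equivalently, up to an additive constant 2, $N^1(f)=\log_2 C^1(f)$, where $C^1(f)$ is the minimum number of rectangles $S\times T$ on which $f\equiv1$ whose union is $f^{-1}(1)$. An order ideal is a subset $I\subseteq M$ with $y\in I, x\le y\Rightarrow x\in I$. For an order ideal $I$, $N^1(M,I)(n)$ is $N^1$ of the function where Alice receives $m_1,m_3,\dots,m_{2n-1}\in M$, Bob receives $m_2,\dots,m_{2n}\in M$, with value $1$ iff $m_1\cdots m_{2n}\in I$; $N^1(M)(n)=\max_I N^1(M,I)(n)$. Asymptotics are as $n\to\infty$. *)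

(* Defs.v *)
From mathcomp Require Import all_boot all_order all_fingroup.
Set Implicit Arguments. Unset Strict Implicit. Unset Printing Implicit Defensive.

Definition stable_order (M : finGroupType) (le : rel M) : Prop :=
  [/\ reflexive le, antisymmetric le, transitive le,
      (forall x y z : M, le x y -> le (z * x)%g (z * y)%g) &
      (forall x y z : M, le x y -> le (x * z)%g (y * z)%g)].

Definition order_ideal (M : finGroupType) (le : rel M) (I : {set M}) : bool :=
  [forall y, [forall x, (y \in I) && le x y ==> (x \in I)]].

Definition one_cover_of_size (X Y : finType) (f : X -> Y -> bool) (k : nat) : bool :=
  [exists R : {ffun 'I_k -> {set X} * {set Y}},
    [forall i, forall x, forall y, (x \in (R i).1) && (y \in (R i).2) ==> f x y] &&
    [forall x, forall y, f x y ==> [exists i, (x \in (R i).1) && (y \in (R i).2)]]].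

(* C^1(f): the minimum such k (a cover with #|X|*#|Y| singleton rectangles
   always exists, so the search below always succeeds). *)
Definition C1 (X Y : finType) (f : X -> Y -> bool) : nat :=
  find (one_cover_of_size f) (iota 0 (#|X| * #|Y|).+1).

(* N^1(f) = ceil(log2 C^1(f)) (equal to the protocol complexity up to an
   additive constant). *)
Definition N1 (X Y : finType) (f : X -> Y -> bool) : nat := up_log 2 (C1 f).

(* The word problem function: Alice holds m1,m3,...,m_{2n-1} (tuple a),
   Bob holds m2,...,m_{2n} (tuple b); value 1 iff m1 m2 ... m_{2n} in I. *)
Definition word_fun (M : finGroupType) (I : {set M}) (n : nat)
  (a b : n.-tuple M) : bool :=
  (\prod_(i < n) (tnth a i * tnth b i))%g \in I.

Definition N1_ideal (M : finGroupType) (I : {set M}) (n : nat) : nat :=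
  N1 (@word_fun M I n).

Definition N1_monoid (M : finGroupType) (le : rel M) (n : nat) : nat :=
  \max_(I : {set M} | order_ideal le I) N1_ideal I n.

(* Main.v *)
Require Import Defs.
From mathcomp Require Import all_boot all_order all_fingroup all_solvable all_algebra.
From mathcomp Require Import zify.
Set Implicit Arguments. Unset Strict Implicit. Unset Printing Implicit Defensive.

Module LA.
Import GRing.Theory.
Local Open Scope ring_scope.
Definition chi (F : fieldType) (N : nat) (s : {set 'I_N}) : 'rV[F]_N :=
  \row_j (j \in s)%:R.

Lemma chi_inj (F : fieldType) N : injective (@chi F N).
Proof.
move=> s t /matrixP E; apply/setP => j; have := E 0 j; rewrite !mxE.
by case: (j \in s); case: (j \in t) => //= /eqP; rewrite ?oner_eq0 // eq_sym oner_eq0.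
Qed.

Lemma count_in_space (F : fieldType) N m (A : 'M[F]_(m, N)) :
  (#|[set s : {set 'I_N} | (chi F s <= A)%MS]| <= 2 ^ \rank A)%N.
Proof.
set f := maxrankfun A^T.
set C := rowsub f A^T.
have eC : (A^T <= C)%MS by rewrite eq_maxrowsub.
case/submxP: eC => D eD.
have eA : A = colsub f A *m D^T.
  apply: (can_inj (@trmxK _ _ _)); rewrite trmx_mul trmxK {1}eD.
  congr (_ *m _); apply/matrixP => i j; by rewrite !mxE.
pose g (s : {set 'I_N}) : {ffun 'I_(\rank A^T) -> bool} := [ffun k => f k \in s].
have ginj : {in [set s : {set 'I_N} | (chi F s <= A)%MS] &, injective g}.
  move=> s t; rewrite !inE => /submxP [x Ex] /submxP [y Ey] eg.
  apply: (@chi_inj F).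
  have -> : chi F t = colsub f (chi F t) *m D^T.
    by rewrite Ey -mulmx_colsub -mulmxA -eA.
  have -> : chi F s = colsub f (chi F s) *m D^T.
    by rewrite Ex -mulmx_colsub -mulmxA -eA.
  congr (_ *m _).
  apply/matrixP => i k; rewrite !mxE.
  by move/ffunP: eg => /(_ k); rewrite !ffunE => ->.
have := card_in_imset ginj.
move=> <-.
rewrite -[\rank A]mxrank_tr.
have -> : (2 ^ \rank A^T)%N = #|{ffun 'I_(\rank A^T) -> bool}| by rewrite card_ffun card_bool card_ord.
exact: max_card.
Qed.

Lemma rect_bound p N (S T : {set {set 'I_N}}) : prime p ->
 (forall s t, s \in S -> t \in T ->
    p %| \sum_(k < N) ((k \in s) && (k \in t)))%N ->
 (#|S| * #|T| <= 2 ^ N)%N.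
Proof.
move=> pp H.
have chF : p \in [char 'F_p] := pchar_Fp pp.
pose A : 'M['F_p]_(#|S|, N) := \matrix_(i < #|S|) chi 'F_p (enum_val i).
pose B : 'M['F_p]_(#|T|, N) := \matrix_(i < #|T|) chi 'F_p (enum_val i).
have AB : B *m A^T = 0.
  apply/matrixP => i j; rewrite !mxE.
  have := H _ _ (enum_valP j) (enum_valP i).
  rewrite (dvdn_charf chF) => /eqP E.
  apply: etrans (_ : _ = (\sum_(k<N) ((k \in enum_val j) && (k \in enum_val i)) : nat)%:R) _; last exact: E.
  rewrite natr_sum; apply: eq_bigr => k _; rewrite !mxE.
  by case: (k \in _); case: (k \in _); rewrite ?mulr1 ?mulr0.
have rB : (\rank B <= N - \rank A)%N.
  rewrite -(mxrank_tr A) -mxrank_ker; apply: mxrankS; by rewrite sub_kermx AB.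
have cS : (#|S| <= 2 ^ \rank A)%N.
  apply: leq_trans (count_in_space A); apply: subset_leq_card.
  apply/subsetP => s Hs; rewrite inE.
  have <- : row (enum_rank_in Hs s) A = chi 'F_p s by rewrite rowK enum_rankK_in.
  exact: row_sub.
have cT : (#|T| <= 2 ^ \rank B)%N.
  apply: leq_trans (count_in_space B); apply: subset_leq_card.
  apply/subsetP => s Hs; rewrite inE.
  have <- : row (enum_rank_in Hs s) B = chi 'F_p s by rewrite rowK enum_rankK_in.
  exact: row_sub.
have rA : (\rank A <= N)%N by exact: rank_leq_col.
apply: leq_trans (leq_mul cS cT) _; rewrite -expnD leq_exp2l //.
by apply: leq_trans (leq_add (leqnn _) rB) _; rewrite subnKC.
Qed.
End LA.
Definition ga (G : finGroupType) (g : G) (P : nat -> bool) (i : nat) : G :=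
  if P i./2 then (if odd i then g^-1 else g)%g else 1%g.

Lemma prod_gadget (G : finGroupType) (g h : G) P Q m :
  (\prod_(0 <= i < m.*2) (ga g P i * ga h Q i))%g =
  ((g * h * g^-1 * h^-1) ^+ (\sum_(0 <= j < m) (P j && Q j)))%g.
Proof.
elim: m => [|m IH]; first by rewrite !big_geq // expg0.
rewrite doubleS (big_nat_recr _ _ _ (leq0n _)) (big_nat_recr _ _ _ (leq0n _)) /= IH -mulgA big_nat_recr //= expgD.
congr (_ * _)%g.
rewrite /ga /= odd_double /= uphalf_double doubleK.
case: (P m); case: (Q m); rewrite /= ?expg1 ?expg0 ?mulg1 ?mul1g ?mulgV //.
by rewrite !mulgA.
Qed.

Lemma prod_gadget_n (G : finGroupType) (g h : G) P Q n :
  ~~ P n./2 -> ~~ Q n./2 ->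
  (\prod_(i < n) (ga g P i * ga h Q i))%g =
  ((g * h * g^-1 * h^-1) ^+ (\sum_(0 <= j < n./2) (P j && Q j)))%g.
Proof.
move=> nP nQ; rewrite -prod_gadget -(big_mkord xpredT (fun i => ga g P i * ga h Q i)%g).
have := odd_double_half n; case: (odd n) => /= En; last by rewrite -{1}En add0n.
rewrite -{1}En add1n (big_nat_recr _ _ _ (leq0n _)) /=.
by rewrite /ga /= odd_double doubleK (negPf nP) (negPf nQ) !mulg1.
Qed.

Lemma stable_eq (G : finGroupType) (le : rel G) : stable_order le ->
  forall x y, le x y -> x = y.
Proof.
case=> refl anti trans lm rm x y lxy.
set g := (y * x^-1)%g.
have l1g : le 1%g g by have := rm _ _ x^-1%g lxy; rewrite mulgV.
have lk : forall k, le 1%g (g ^+ k)%g.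
  elim=> [|k IH]; first by rewrite expg0.
  apply: trans l1g _; have := lm _ _ g IH; by rewrite mulg1 expgS.
have lg1 : le g 1%g.
  have := lm _ _ g (lk (#[g]).-1)%g; rewrite mulg1 -expgS prednK ?order_gt0 //.
  by rewrite expg_order.
have : g = 1%g by apply: anti; rewrite l1g lg1.
by move/eqP; rewrite -eq_mulgV1 => /eqP.
Qed.

Definition Pset N (s : {set 'I_N}) (j : nat) : bool :=
  [exists k : 'I_N, (k \in s) && (val k == j)].

Lemma Pset_ge N (s : {set 'I_N}) j : N <= j -> ~~ Pset s j.
Proof.
move=> Nj; apply/existsP => [[k /andP [_ /eqP Ek]]].
by have := ltn_ord k; rewrite Ek ltnNge Nj.
Qed.

Lemma Pset_ord N (s : {set 'I_N}) (k : 'I_N) : Pset s k = (k \in s).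
Proof.
apply/existsP/idP => [[k' /andP [H /eqP E]]|H]; last by exists k; rewrite H eqxx.
by have -> : k = k' by apply: val_inj.
Qed.

Definition enc (G : finGroupType) (g : G) n N (s : {set 'I_N}) : n.-tuple G :=
  [tuple ga g (Pset s) i | i < n].

Lemma word_enc (G : finGroupType) (g h : G) (I : {set G}) n
  (s t : {set 'I_(n./2)}) :
  word_fun I (enc g n s) (enc h n t) =
  (((g * h * g^-1 * h^-1) ^+ (\sum_(k < n./2) ((k \in s) && (k \in t))))%g \in I).
Proof.
rewrite /word_fun.
under eq_bigr => i _ do rewrite /enc !tnth_mktuple.
rewrite prod_gadget_n ?Pset_ge // big_mkord.
by under eq_bigr => k _ do rewrite !Pset_ord.
Qed.

Lemma card_bigcup_le (T : finType) k (F : 'I_k -> {set T}) :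
  #|\bigcup_(i < k) F i| <= \sum_(i < k) #|F i|.
Proof.
elim: k F => [|k IH] F; first by rewrite !big_ord0 cards0.
rewrite !big_ord_recr /=.
apply: leq_trans (leq_of_leqif (leq_card_setU _ _)) _.
by rewrite leq_add2r IH.
Qed.

Lemma cover_bound (G : finGroupType) (g h : G) n p k :
  prime p -> p %| #[(g * h * g^-1 * h^-1)%g]%g ->
  one_cover_of_size (@word_fun G (<[((g * h * g^-1 * h^-1) ^+ p)%g]>%g : {set G}) n) k ->
  3 ^ n./2 <= k * 2 ^ n./2.
Proof.
set c := (g * h * g^-1 * h^-1)%g; set N := n./2.
set I := (<[(c ^+ p)%g]>%g : {set G}).
move=> pp pc /existsP [R /andP [/forallP H1 /forallP H2]].
pose S i := [set s : {set 'I_N} | enc g n s \in (R i).1].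
pose T i := [set t : {set 'I_N} | enc h n t \in (R i).2].
have key : forall s t : {set 'I_N}, @word_fun G I n (enc g n s) (enc h n t) ->
    p %| \sum_(k < N) ((k \in s) && (k \in t)).
  move=> s t; rewrite word_enc => /cycleP [e]; rewrite -expgM => /eqP.
  rewrite eq_expg_mod_order => /eqP E.
  have := congr1 (modn^~ p) E; rewrite !modn_dvdm // => E'.
  by rewrite /dvdn E' modnMr.
have rect : forall i, #|S i| * #|T i| <= 2 ^ N.
  move=> i; apply: (LA.rect_bound pp) => s t; rewrite !inE => Hs Ht; apply: key.
  by have := H1 i; move/forallP/(_ (enc g n s))/forallP/(_ (enc h n t)); rewrite Hs Ht.
pose phi (u : {ffun 'I_N -> 'I_3}) :=
  ([set j | val (u j) == 0], [set j | val (u j) == 1]).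
have phi_inj : injective phi.
  move=> u v [E0 E1]; apply/ffunP => j; apply: val_inj.
  move: E0 E1 => /setP/(_ j) E0 /setP/(_ j) E1; move: E0 E1; rewrite !inE.
  by case: (u j) => [[|[|[|a]]] ?]; case: (v j) => [[|[|[|b]]] ?].
have sub : phi @: setT \subset \bigcup_(i < k) setX (S i) (T i).
  apply/subsetP => st /imsetP [u _ ->].
  have : @word_fun G I n (enc g n [set j | val (u j) == 0]) (enc h n [set j | val (u j) == 1]).
    rewrite word_enc big1 ?expg0 ?group1 // => j _; rewrite !inE.
    by case: (val (u j)) => [|[|]].
  move/(implyP (forallP (H2 _) _)) => /existsP [i /andP [Hs Ht]].
  by apply/bigcupP; exists i => //; rewrite !inE /= Hs Ht.
have := subset_leq_card sub; rewrite card_imset // cardsT card_ffun !card_ord => H3.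
apply: leq_trans H3 (leq_trans (card_bigcup_le _) _).
apply: (@leq_trans (\sum_(i < k) 2 ^ N)); first by apply: leq_sum => i _; rewrite cardsX rect.
by rewrite sum_nat_const card_ord.
Qed.

Lemma C1_cases (X Y : finType) (f : X -> Y -> bool) :
  one_cover_of_size f (C1 f) \/ C1 f = (#|X| * #|Y|).+1.
Proof.
rewrite /C1; set s := iota _ _.
case: (boolP (has (one_cover_of_size f) s)) => H; last by right; rewrite hasNfind // size_iota.
left; have := nth_find 0 H; rewrite nth_iota ?add0n //.
by move: H; rewrite has_find size_iota.
Qed.

Theorem mainTheorem11 (G : finGroupType) (le : rel G) :
  ~~ abelian [set: G] -> stable_order le ->
  exists c : nat, 0 < c /\ exists n0 : nat,
    forall n : nat, n0 <= n -> n <= c * N1_monoid le n.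
Proof.
move=> nab Hle.
have [g [h gh]] : exists g h : G, (g * h != h * g)%g.
  case: (boolP [exists g : G, exists h : G, (g * h != h * g)%g]).
    by move=> /existsP [g /existsP [h H]]; exists g, h.
  move=> H; exfalso; apply: (negP nab); apply/centsP => x _ y _; apply/eqP.
  by move/existsPn: H => /(_ x)/existsPn/(_ y); rewrite negbK.
set c := (g * h * g^-1 * h^-1)%g.
have c1 : c != 1%g.
  apply: contra gh => /eqP E; rewrite -[(h * g)%g]mul1g -E /c.
  by rewrite !mulgA !mulgKV.
have oc : 1 < #[c]%g.
  have := order_gt0 c; have : #[c]%g != 1 by rewrite order_eq1.
  by case: (#[c]%g) => [|[|]].
set p := pdiv #[c]%g.
have pp : prime p := pdiv_prime oc.
have pc : p %| #[c]%g := pdiv_dvd _.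
set I := (<[(c ^+ p)%g]>%g : {set G}).
have hI : order_ideal le I.
  apply/forallP => y; apply/forallP => x; apply/implyP => /andP [Hy Hxy].
  by rewrite (stable_eq Hle Hxy).
have G2 : 2 <= #|G|.
  have : [set 1%g; c] \subset [set: G] by apply: subsetT.
  by move/subset_leq_card; rewrite cards2 eq_sym c1 cardsT.
exists 5; split => //; exists 4 => n n4.
apply: (@leq_trans (5 * N1_ideal I n)); last by rewrite leq_mul2l leq_bigmax_cond.
rewrite /N1_ideal /N1.
set C := C1 _. set N := n./2.
have H3 : 3 ^ N <= C * 2 ^ N.
  case: (C1_cases (@word_fun G I n)) => Hc; first exact: cover_bound pp pc Hc.
  rewrite /C Hc card_tuple.
  apply: (@leq_trans (4 ^ N)); first by rewrite leq_exp2r //; lia.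
  apply: (@leq_trans (2 ^ n)); first by rewrite -(expnM 2 2) leq_exp2l //; lia.
  apply: (@leq_trans (#|G| ^ n)); first by rewrite leq_exp2r //; lia.
  apply: (@leq_trans (#|G| ^ n * #|G| ^ n).+1).
    have : 0 < #|G| ^ n by rewrite expn_gt0; lia.
    move=> Hp; have := leq_pmulr (#|G| ^ n) Hp; lia.
  have : 0 < 2 ^ N by rewrite expn_gt0.
  move=> Hp; apply: leq_pmulr Hp.
set e := up_log 2 C.
have Ce : C <= 2 ^ e := up_logP _ (ltnSn 1).
have Ne : N <= 2 * e.
  rewrite leqNgt; apply/negP => Hlt.
  have H4 : 3 ^ N <= 2 ^ (e + N).
    by apply: leq_trans H3 _; rewrite expnD leq_mul2r Ce orbT.
  have H5 : 3 ^ (N * 2) <= 2 ^ ((e + N) * 2).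
    by rewrite !expnM !(expnS _ 1) !expn1; exact: (leq_mul H4 H4).
  have H6 : 2 ^ ((e + N) * 2) < 2 ^ (3 * N) by rewrite ltn_exp2l //; lia.
  have H7 : 2 ^ (3 * N) <= 3 ^ (N * 2).
    rewrite (expnM 2 3 N) (mulnC N 2) (expnM 3 2 N) leq_exp2r //; lia.
  have := leq_trans H5 (ltnW (leq_trans H6 H7)).
  move: (leq_trans H6 H7) H5 => A B.
  have := leq_ltn_trans B A; by rewrite ltnn.
have En := odd_double_half n.
lia.
Qed.
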